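(* Let $p_1=3, p_2=5, p_3=7, p_4=11, p_5=13,\dots$ be the odd prime numbers in increasing order. Then for all $m,k\in\mathbb{N}$, $$\prod_{n=1}^m\left(\frac{p_n^{2k}}{p_n^{2k}-1}\right) > \sum_{n=0}^m \frac{1}{(2n+1)^{2k}}.$$
   Context: $\mathbb{N}=\{1,2,3,\dots\}$. *)

(* Defs.v *)
From mathcomp Require Import all_boot all_order all_algebra.
Set Implicit Arguments. Unset Strict Implicit. Unset Printing Implicit Defensive.

Lemma exists_prime_above (m : nat) : exists p, (m < p) && prime p.
Proof. by case: (prime_above m) => p H1 H2; exists p; rewrite H1 H2. Qed.

Definition next_prime (m : nat) : nat := ex_minn (exists_prime_above m).

(* odd_prime n = p_n, the n-th odd prime (1-indexed): p_1 = 3, p_2 = 5, ...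
   odd_prime 0 = 2 is just an auxiliary seed value. *)
Fixpoint odd_prime (n : nat) : nat :=
  match n with
  | 0 => 2
  | n'.+1 => next_prime (odd_prime n')
  end.

(* Main.v *)
Require Import Defs.
From mathcomp Require Import all_boot all_order all_algebra zify ring.
Import Order.TTheory GRing.Theory Num.Theory.

Lemma next_primeP m : [/\ m < next_prime m, prime (next_prime m) &
  forall r, m < r -> prime r -> next_prime m <= r].
Proof.
rewrite /next_prime; case: ex_minnP => q /andP[H1 H2] Hmin; split => //.
by move=> r H3 H4; apply: Hmin; rewrite H3 H4.
Qed.

Lemma odd_prime_prime n : prime (odd_prime n).
Proof. by case: n => [|n] //=; case: (next_primeP (odd_prime n)). Qed.

Lemma odd_prime_ge n : 2 * n + 1 <= odd_prime n.
Proof.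
elim: n => [|n IH] //=; case: (next_primeP (odd_prime n)) => H1 H2 _.
have H3 : odd (next_prime (odd_prime n)).
  have h1 : 2 <= odd_prime n by apply: prime_gt1; exact: odd_prime_prime.
  case: (even_prime H2) => // E; move: H1; rewrite E; lia.
move: H3 H1 IH; set q := next_prime _; set r := odd_prime n => H3 H1 IH.
have : 2 * n + 2 <= q by lia.
rewrite leq_eqVlt => /orP[/eqP E|]; last by rewrite mulnS; lia.
by move: H3; rewrite -E addn2 /= mul2n odd_double.
Qed.

Lemma odd_prime_all m r : prime r -> 2 < r -> r <= odd_prime m ->
  exists2 i, (1 <= i <= m)%N & r = odd_prime i.
Proof.
move=> pr r2; elim: m => [|m IH] /=; first by lia.
case: (next_primeP (odd_prime m)) => H1 H2 H3 Hr.
case: (leqP r (odd_prime m)) => h.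
  by case: (IH h) => i Hi ->; exists i => //; lia.
exists m.+1; first by lia.
by apply/eqP; rewrite eqn_leq Hr H3.
Qed.

Local Open Scope ring_scope.

Definition f (s j : nat) : rat := ((j%:R) ^+ s)^-1.
Definition smooth (ps : seq nat) (j : nat) := (0 < j)%N && all (mem ps) (primes j).
Definition A s ps B := \sum_(0 <= j < B.+1) (if smooth ps j then f s j else 0).
Definition E s ps := \prod_(p <- ps) (1 - f s p)^-1.

Lemma f_ge0 s j : 0 <= f s j.
Proof. by rewrite /f invr_ge0 exprn_ge0 // ler0n. Qed.

Lemma fM s a b : f s (a * b) = f s a * f s b.
Proof. by rewrite /f natrM exprMn invfM. Qed.

Lemma f_lt1 s p : (0 < s)%N -> (1 < p)%N -> f s p < 1.
Proof.
move=> s0 p1; rewrite /f invf_lt1; last by rewrite exprn_gt0 // ltr0n; lia.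
by rewrite exprn_egt1 -?lt0n // ltr1n.
Qed.

Lemma f_gt0 s p : (0 < p)%N -> 0 < f s p.
Proof. by move=> p0; rewrite /f invr_gt0 exprn_gt0 // ltr0n. Qed.

Lemma A_nil s B : A s [::] B <= 1.
Proof.
rewrite /A; elim: B => [|B IH]; first by rewrite big_nat1 /smooth /=.
rewrite big_nat_recr //=.
case: ifP => [/andP[B0 /allP Hall]|_]; last by rewrite addr0.
case: B IH Hall B0 => [|B] IH Hall B0.
  by rewrite big_nat1 /smooth /= add0r /f expr1n invr1.
have h : (1 < B.+2)%N by [].
have := pdiv_prime h => pp.
have : pdiv B.+2 \in primes B.+2 by rewrite mem_primes pp pdiv_dvd.
by move/Hall.
Qed.

Lemma smoothM p ps c : prime p -> (0 < c)%N ->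
  smooth (p :: ps) (p * c) = smooth (p :: ps) c.
Proof.
move=> pp c0; rewrite /smooth c0 muln_gt0 c0 prime_gt0 //=.
apply/allP/allP => H r Hr.
  by apply: H; rewrite (primesM _ (prime_gt0 pp) c0) Hr orbT.
move: Hr; rewrite (primesM _ (prime_gt0 pp) c0) => /orP[|/H //].
by rewrite primes_prime // inE => /eqP ->; rewrite /= inE eqxx.
Qed.

Lemma A_div s p ps B : prime p ->
  \sum_(0 <= j < B.+1) (if smooth (p :: ps) j && (p %| j)%N then f s j else 0)
  = f s p * A s (p :: ps) (B %/ p).
Proof.
move=> pp; rewrite /A; elim: B => [|B IH].
  by rewrite div0n !big_nat1 /smooth /= mulr0.
rewrite big_nat_recr //= IH divnS ?prime_gt0 //.
case: (boolP (p %| B.+1)%N) => Hd /=.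
  rewrite add1n [in RHS]big_nat_recr //= mulrDr andbT.
  have E1 : ((B %/ p).+1 = B.+1 %/ p)%N by rewrite divnS ?prime_gt0 // Hd.
  have E2 : (B.+1 = p * (B %/ p).+1)%N by rewrite E1 mulnC divnK.
  have -> : f s B.+1 = f s p * f s (B %/ p).+1 by rewrite {1}E2 fM.
  have -> : smooth (p :: ps) B.+1 = smooth (p :: ps) (B %/ p).+1 by rewrite {1}E2 smoothM.
  by case: ifP; rewrite ?mulr0.
by rewrite add0n; case: (smooth _ _); rewrite /= addr0.
Qed.

Lemma A_split s p ps B : prime p ->
  A s (p :: ps) B <= A s ps B + f s p * A s (p :: ps) (B %/ p).
Proof.
move=> pp; rewrite -A_div // /A -big_split /=; apply: ler_sum => j _.
case: ifP => [/andP[j0 /allP H]|_]; last by rewrite addr_ge0 //; case: ifP => // _; exact: f_ge0.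
case: (boolP (p %| j)%N) => nd.
  by rewrite /= lerDr; case: ifP => // _; exact: f_ge0.
rewrite /= addr0 /smooth j0 /=.
have -> : all (mem ps) (primes j).
  apply/allP => r Hr; have := H r Hr; rewrite inE => /orP[/eqP Er|//].
  by move: nd; rewrite -Er; move: Hr; rewrite mem_primes => /and3P[_ _ ->].
by [].
Qed.

Lemma E_gt0 s ps : (0 < s)%N -> all prime ps -> 0 < E s ps.
Proof.
move=> s0; elim: ps => [|p ps IH] /=; first by rewrite /E big_nil.
move=> /andP[pp Hps]; rewrite /E big_cons mulr_gt0 ?IH //.
by rewrite invr_gt0 subr_gt0 f_lt1 // prime_gt1.
Qed.

Lemma A_lt s ps : (0 < s)%N -> all prime ps ->
  (forall B, A s ps B <= E s ps) /\
  (ps != [::] -> forall B, A s ps B < E s ps).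
Proof.
move=> s0; elim: ps => [|p ps IH] /=.
  by split=> // B; rewrite /E big_nil; exact: A_nil.
move=> Hall; have /andP[pp Hps] := Hall; case: (IH Hps) => IHle _.
have Hlt : forall B, A s (p :: ps) B < E s (p :: ps).
  move=> B; elim: B {-2}B (leqnn B) => [|N IHN] B HB.
    have -> : B = 0%N by lia.
    rewrite /A big_nat1 /smooth /=; exact: (E_gt0 _ (p :: ps) s0 Hall).
  set x := f s p.
  have x1 : x < 1 by rewrite f_lt1 // prime_gt1.
  have x0 : 0 < x by rewrite f_gt0 // prime_gt0.
  have Ee : E s (p :: ps) = E s ps / (1 - x) by rewrite /E big_cons mulrC.
  apply: (le_lt_trans (A_split s p ps B pp)).
  case: B HB => [|B] HB.
    rewrite div0n /A !big_nat1 /smooth /= add0r mulr0; exact: (E_gt0 _ (p :: ps) s0 Hall).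
  have Hd : (B.+1 %/ p <= N)%N.
    have := ltn_Pdiv (prime_gt1 pp) (ltn0Sn B); lia.
  have h2 := IHN _ Hd.
  apply: (le_lt_trans (lerD (IHle B.+1) (lexx _))).
  apply: (lt_le_trans (y := E s ps + x * E s (p :: ps))).
    by rewrite ltrD2l ltr_pM2l //; exact: h2.
  rewrite Ee.
  have hx : 1 - x != 0 by rewrite subr_eq0 eq_sym lt_eqF.
  rewrite le_eqVlt; apply/orP; left; apply/eqP; field; exact: hx.
by split=> // B; apply/ltW.
Qed.

Lemma sum_odd s m : \sum_(0 <= n < m.+1) f s (2 * n + 1) =
  \sum_(0 <= j < (2 * m + 1).+1) (if odd j then f s j else 0).
Proof.
elim: m => [|m IH]; first by rewrite big_nat1 big_nat_recr //= big_nat1 /= add0r.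
rewrite big_nat_recr //= IH.
have -> : (2 * m.+1 + 1).+1 = (2 * m + 1).+3 by lia.
rewrite [in RHS]big_nat_recr //= [in RHS]big_nat_recr //=.
have Ho : odd (2 * m + 1) by rewrite oddD oddM.
rewrite Ho /= addr0; congr (_ + f s _); lia.
Qed.

Theorem proposition2p3 (m k : nat) (hm : (1 <= m)%N) (hk : (1 <= k)%N) :
  \prod_(1 <= n < m.+1) ((odd_prime n)%:R ^+ (2 * k)
                          / ((odd_prime n)%:R ^+ (2 * k) - 1) : rat)
  > \sum_(0 <= n < m.+1) 1 / ((2 * n + 1)%:R ^+ (2 * k) : rat).
Proof.
set s := (2 * k)%N.
have s0 : (0 < s)%N by rewrite /s; lia.
set ps := [seq odd_prime n | n <- iota 1 m].
have Hall : all prime ps by apply/allP => r /mapP[n _ ->]; exact: odd_prime_prime.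
have Hne : ps != [::] by rewrite /ps; case: (m) hm.
have HE : \prod_(1 <= n < m.+1) ((odd_prime n)%:R ^+ s / ((odd_prime n)%:R ^+ s - 1) : rat) = E s ps.
  rewrite /E big_map /index_iota subSS subn0; apply: eq_bigr => n _.
  have hq : (1 < odd_prime n)%N by apply: prime_gt1; exact: odd_prime_prime.
  have hy : 1 < (odd_prime n)%:R ^+ s :> rat by rewrite exprn_egt1 -?lt0n // ltr1n.
  have hy0 : (odd_prime n)%:R ^+ s != 0 :> rat by rewrite gt_eqF // (lt_trans ltr01).
  have hy1 : (odd_prime n)%:R ^+ s - 1 != 0 :> rat by rewrite subr_eq0 gt_eqF.
  by rewrite /f; field; rewrite hy0 hy1.
rewrite HE.
apply: le_lt_trans ((A_lt s ps s0 Hall).2 Hne (2 * m + 1)%N).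
have -> : \sum_(0 <= n < m.+1) 1 / (2 * n + 1)%:R ^+ s = \sum_(0 <= n < m.+1) f s (2 * n + 1).
  by apply: eq_bigr => n _; rewrite /f div1r.
rewrite sum_odd /A big_nat_cond [X in _ <= X]big_nat_cond.
apply: ler_sum => j /andP[/andP[_ Hjb] _].
case: (boolP (odd j)) => Hj; last by case: ifP => // _; exact: f_ge0.
have -> : smooth ps j; last by [].
have j0 : (0 < j)%N by case: (j) Hj.
rewrite /smooth j0 /=; apply/allP => r; rewrite mem_primes => /and3P[pr _ rj].
have r2 : (2 < r)%N.
  case: (even_prime pr) => [Er|]; last by have := prime_gt1 pr; case: (r) => [|[|[|]]].
  by move: rj; rewrite Er => /dvdn_odd/(_ Hj).
have rle : (r <= odd_prime m)%N.
  have := dvdn_leq j0 rj; have := odd_prime_ge m; lia.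
case: (odd_prime_all m r pr r2 rle) => i Hi ->.
by apply/mapP; exists i => //; rewrite mem_iota; lia.
Qed.
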